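(* Let $(X,d)$ be a compact metric space, $k\geq1$, $T:\mathbb{Z}^k\times X\to X$ a continuous action, and $c>0$ such that any two distinct $x,y\in X$ satisfy $\sup_{u\in\mathbb{Z}^k}d(T^ux,T^uy)>c$. Fix an integer $l>0$ such that whenever $d(x,y)\geq c/2$ there is $u\in\mathbb{Z}^k$ with $|u|\leq l$ and $d(T^ux,T^uy)\geq c$, and fix $\alpha>1$ with $\alpha^l<2$. For $x\neq y$ let $\mathbf{n}(x,y)=\min\{n\geq0:\exists u\in\mathbb{Z}^k,\ |u|\leq n,\ d(T^ux,T^uy)\geq c\}$, let $\mathbf{n}(x,x)=\infty$, and set $\rho(x,y)=\alpha^{-\mathbf{n}(x,y)}$ (so $\rho(x,x)=0$). Then: (1) $\rho(x,y)=\rho(y,x)$; (2) $\rho(x,y)=0$ iff $x=y$; (3) $\rho(x,z)\leq2\max(\rho(x,y),\rho(y,z))$ for all $x,y,z$; (4) if $x_n\to x$ and $y_n\to y$ then $\limsup_{n\to\infty}\rho(x_n,y_n)\leq\rho(x,y)$; (5) the balls $B_r(x,\rho)=\{y:\rho(x,y)<r\}$ ($x\in X$, $r>0$) form an open base of the topology of $X$.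
   Context: $|u|$ denotes the norm of $u\in\mathbb{Z}^k$ (a fixed norm, e.g. Euclidean). Such an integer $l$ exists by expansiveness and compactness. *)

(* Defs.v *)
From HB Require Import structures.
From mathcomp Require Import all_boot all_order all_algebra.
From mathcomp Require Import boolp classical_sets reals topology sequences.
Set Implicit Arguments. Unset Strict Implicit. Unset Printing Implicit Defensive.
Import Order.TTheory GRing.Theory Num.Theory.
Local Open Scope ring_scope.

Section Defs.
Variables (R : realType) (X : Type).

Definition is_metric (d : X -> X -> R) : Prop :=
  [/\ forall x y, 0 <= d x y,
      forall x y, d x y = 0 <-> x = y,
      forall x y, d x y = d y x &
      forall x y z, d x z <= d x y + d y z].

Definition d_open (d : X -> X -> R) (U : X -> Prop) : Prop :=
  forall x, U x -> exists2 e : R, 0 < e & forall y, d x y < e -> U y.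

Definition d_compact (d : X -> X -> R) : Prop :=
  forall (I : Type) (F : I -> X -> Prop),
    (forall i, d_open d (F i)) -> (forall x, exists i, F i x) ->
    exists (n : nat) (f : 'I_n -> I), forall x, exists i, F (f i) x.

Definition d_continuous (d : X -> X -> R) (f : X -> X) : Prop :=
  forall x (e : R), 0 < e -> exists2 del : R, 0 < del &
    forall y, d x y < del -> d (f x) (f y) < e.

Definition d_cvg (d : X -> X -> R) (s : nat -> X) (x : X) : Prop :=
  forall e : R, 0 < e -> exists N, forall n, (N <= n)%N -> d (s n) x < e.

(* Euclidean norm on Z^k: |u| <= n  <->  sum_i u_i^2 <= n^2 (n >= 0) *)
Definition normle (k : nat) (u : 'rV[int]_k) (n : nat) : bool :=
  (\sum_(i < k) (u ord0 i) ^+ 2 <= (n ^ 2)%:Z)%R.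

Definition is_action (k : nat) (T : 'rV[int]_k -> X -> X) : Prop :=
  (forall x, T 0 x = x) /\ (forall u v x, T (u + v) x = T u (T v x)).

Definition nset (d : X -> X -> R) (k : nat) (T : 'rV[int]_k -> X -> X)
  (c : R) (x y : X) (n : nat) : Prop :=
  exists2 u, normle u n & c <= d (T u x) (T u y).

(* bold n(x,y): Some (minimal such n), or None (= infinity) when x = y
   (or when no such n exists) *)
Definition nxy (d : X -> X -> R) (k : nat) (T : 'rV[int]_k -> X -> X)
  (c : R) (x y : X) : option nat :=
  if pselect (x = y) then None else
  match pselect (exists n, `[< nset d T c x y n >]) with
  | left h => Some (ex_minn h)
  | right _ => None
  end.

(* rho(x,y) = alpha^(-n(x,y)), with alpha^(-infinity) = 0 *)
Definition rho (d : X -> X -> R) (k : nat) (T : 'rV[int]_k -> X -> X)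
  (c alpha : R) (x y : X) : R :=
  match nxy d T c x y with Some n => alpha ^- n | None => 0 end.

End Defs.

(* Main.v *)
Require Import Defs.
From HB Require Import structures.
From mathcomp Require Import all_boot all_order all_algebra.
From mathcomp Require Import boolp classical_sets reals topology sequences normedtype.
From mathcomp Require Import ring lra zify.
Import Order.TTheory GRing.Theory Num.Theory.
Local Open Scope ring_scope.
Set Implicit Arguments. Unset Strict Implicit.
Lemma normle_mono k (u : 'rV[int]_k) m n : (m <= n)%N -> normle u m -> normle u n.
Proof.
move=> mn; rewrite /normle => h; apply: (le_trans h).
by rewrite lez_nat leq_exp2r.
Qed.

Lemma normle_exists k (u : 'rV[int]_k) : exists n, normle u n.
Proof.
set S := \sum_(i < k) (u ord0 i) ^+ 2.
have S0 : 0 <= S by apply: sumr_ge0 => i _; apply: sqr_ge0.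
exists `|S|%N; rewrite /normle -/S.
have -> : S = (`|S|%N)%:Z by rewrite gez0_abs.
rewrite lez_nat; case: `|S|%N => // n.
by rewrite expnS leq_pmulr // expn_gt0.
Qed.

Lemma sum_sq_sub k (u v : 'rV[int]_k) (a b : int) :
  \sum_(i < k) (a * u ord0 i - b * v ord0 i) ^+ 2 =
  a ^+ 2 * \sum_(i < k) (u ord0 i) ^+ 2 + b ^+ 2 * \sum_(i < k) (v ord0 i) ^+ 2
  - (a * b) *+ 2 * \sum_(i < k) (u ord0 i * v ord0 i).
Proof.
rewrite !mulr_sumr -big_split -sumrB /=; apply: eq_bigr => i _; ring.
Qed.

Lemma normle_add k (u v : 'rV[int]_k) m n :
  normle u m -> normle v n -> normle (u + v) (m + n).
Proof.
rewrite /normle.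
set a := \sum_(i < k) (u ord0 i) ^+ 2.
set b := \sum_(i < k) (v ord0 i) ^+ 2.
set p := \sum_(i < k) (u ord0 i * v ord0 i).
move=> ha hb.
have -> : \sum_(i < k) ((u + v) ord0 i) ^+ 2 = a + p *+ 2 + b.
  rewrite /a /b /p -sumrMnl -!big_split /=; apply: eq_bigr => i _.
  rewrite mxE; ring.
have a0 : 0 <= a by apply: sumr_ge0 => i _; apply: sqr_ge0.
have b0 : 0 <= b by apply: sumr_ge0 => i _; apply: sqr_ge0.
have H := @sum_sq_sub k u v n%:Z m%:Z.
have H0 : 0 <= \sum_(i < k) (n%:Z * u ord0 i - m%:Z * v ord0 i) ^+ 2.
  by apply: sumr_ge0 => i _; apply: sqr_ge0.
rewrite H in H0.
have ha' : a <= m%:Z ^+ 2 by move: ha; rewrite expnS expn1 PoszM expr2.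
have hb' : b <= n%:Z ^+ 2 by move: hb; rewrite expnS expn1 PoszM expr2.
have hp : p <= m%:Z * n%:Z.
  case: (posnP m) => [m0|mpos].
    have a00 : a = 0 by apply/eqP; rewrite eq_le a0 andbT; move: ha'; rewrite m0.
    have u0 : forall i, u ord0 i = 0.
      move=> i; apply/eqP; rewrite -sqrf_eq0; apply/eqP.
      by apply: (psumr_eq0P _ a00) => // j _; apply: sqr_ge0.
    by rewrite m0 mul0r /p big1 // => i _; rewrite u0 mul0r.
  case: (posnP n) => [n0|npos].
    have b00 : b = 0 by apply/eqP; rewrite eq_le b0 andbT; move: hb'; rewrite n0.
    have v0 : forall i, v ord0 i = 0.
      move=> i; apply/eqP; rewrite -sqrf_eq0; apply/eqP.
      by apply: (psumr_eq0P _ b00) => // j _; apply: sqr_ge0.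
    by rewrite n0 mulr0 /p big1 // => i _; rewrite v0 mulr0.
  have mn0 : 0 < m%:Z * n%:Z by rewrite mulr_gt0 // ltz_nat.
  have h2 : (m%:Z * n%:Z) * p <= (m%:Z * n%:Z) * (m%:Z * n%:Z).
    have : n%:Z ^+ 2 * a <= n%:Z ^+ 2 * m%:Z ^+ 2 by rewrite ler_wpM2l // sqr_ge0.
    have : m%:Z ^+ 2 * b <= m%:Z ^+ 2 * n%:Z ^+ 2 by rewrite ler_wpM2l // sqr_ge0.
    move=> h3 h4.
    rewrite subr_ge0 in H0.
    have h5 := le_trans H0 (lerD h4 h3).
    have e1 : n%:Z ^+ 2 * m%:Z ^+ 2 + m%:Z ^+ 2 * n%:Z ^+ 2 = ((m%:Z * n%:Z) * (m%:Z * n%:Z)) *+ 2 by ring.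
    have e2 : (n%:Z * m%:Z) *+ 2 * p = ((m%:Z * n%:Z) * p) *+ 2 by ring.
    rewrite e2 in h5; rewrite ?e1 -?addrC ?e1 in h5.
    idtac.
    by rewrite -(ler_pMn2r (n:=2)).
  by rewrite -(ler_pM2l mn0).
rewrite expnS expn1 PoszM -expr2 PoszD.
have -> : (m%:Z + n%:Z) ^+ 2 = m%:Z ^+ 2 + (m%:Z * n%:Z) *+ 2 + n%:Z ^+ 2 by ring.
by rewrite lerD // lerD // lerMn2r.
Qed.
Lemma normle_entry k (u : 'rV[int]_k) N i : normle u N -> - N%:Z <= u ord0 i <= N%:Z.
Proof.
rewrite /normle (bigD1 i) //= => h.
have h0 : 0 <= \sum_(j < k | j != i) u ord0 j ^+ 2 by apply: sumr_ge0 => j _; apply: sqr_ge0.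
have h1 : u ord0 i ^+ 2 <= (N ^ 2)%N%:Z by apply: le_trans h; rewrite lerDl.
move: h1; rewrite expnS expn1 PoszM expr2 => h1.
apply/andP; split; nia.
Qed.

Lemma normle_fin k N : exists s : seq 'rV[int]_k, forall u, normle u N -> u \in s.
Proof.
exists [seq \row_j (((f ord0 j : 'I_(N.*2.+1)) : nat)%:Z - N%:Z) | f : 'rV['I_(N.*2.+1)]_k <- enum [set: 'rV['I_(N.*2.+1)]_k]].
move=> u hu; apply/mapP.
exists (\row_j (inord (absz (u ord0 j + N%:Z)) : 'I_(N.*2.+1))); first by rewrite mem_enum inE.
apply/rowP => j; rewrite !mxE.
have /andP[h1 h2] := @normle_entry k u N j hu.
have hp : 0 <= u ord0 j + N%:Z by lia.
rewrite inordK.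
  by rewrite gez0_abs // addrK.
rewrite ltnS -(@lez_nat) gez0_abs //; lia.
Qed.
Lemma bern (R : realType) (a : R) n : 1 < a -> 1 + n%:R * (a - 1) <= a ^+ n.
Proof.
move=> a1; elim: n => [|n IH]; first by rewrite mul0r addr0 expr0.
rewrite exprS -natr1.
have h : 1 <= a ^+ n by apply: exprn_ege1; lra.
nra.
Qed.

Lemma apow_gt0 (R : realType) (a : R) n : 1 < a -> 0 < a ^- n.
Proof. move=> a1; rewrite invr_gt0 exprn_gt0 //; lra. Qed.

Lemma apow_le (R : realType) (a : R) m n : 1 < a -> (m <= n)%N -> a ^- n <= a ^- m.
Proof.
move=> a1 mn; rewrite lef_pV2 ?posrE ?exprn_gt0 //; try lra.
by rewrite ler_eXn2l.
Qed.

Lemma apow_le1 (R : realType) (a : R) n : 1 < a -> a ^- n <= 1.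
Proof. by move=> a1; have := apow_le a1 (leq0n n); rewrite expr0 invr1. Qed.

Lemma apow_small (R : realType) (a e : R) : 1 < a -> 0 < e -> exists N, a ^- N < e.
Proof.
move=> a1 e0.
have h0 : 0 <= (e * (a - 1))^-1 by rewrite invr_ge0 mulr_ge0 //; lra.
have := archi_boundP h0; set N := Num.Def.archi_bound _ => hN.
exists N.
have hb := bern N a1.
have p1 : 0 < e * (a - 1) by rewrite mulr_gt0 //; lra.
have hN' : 1 < N%:R * (e * (a - 1)).
  by rewrite -(ltr_pdivrMr _ _ p1) mul1r.
have pa : 0 < a ^+ N by rewrite exprn_gt0 //; lra.
rewrite -(ltr_pM2l pa) mulfV ?gt_eqF //.
nra.
Qed.

Lemma apow_shift (R : realType) (a : R) m l j : 1 < a -> (j <= m + l)%N ->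
  a ^- m <= a ^+ l * a ^- j.
Proof.
move=> a1 h.
have -> : a ^- m = a ^+ l * a ^- (m + l).
  rewrite exprD invfM mulrCA mulfV ?mulr1 // expf_neq0 //; lra.
rewrite ler_wpM2l ?apow_le //; rewrite exprn_ge0 //; lra.
Qed.
Lemma limsup_le (R : realType) (u : nat -> R) (b : R) (N : nat) :
  (forall n, 0 <= u n <= 1) -> (forall n, (N <= n)%N -> u n <= b) ->
  limn_sup u <= b.
Proof.
move=> u01 ub.
have bu : bounded_fun (u : R^o^nat).
  rewrite /bounded_near; near=> M => x _ /=.
  have /andP[h0 h1] := u01 x.
  rewrite ger0_norm //; apply: (le_trans h1).
  near: M; apply: nbhs_pinfty_ge; exact: num_real.
rewrite limn_supE //.
apply: (@le_trans _ _ (sups u N)).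
  apply: ge_inf; first exact: bounded_fun_has_lbound_sups.
  by exists N.
rewrite /sups /=; apply: ge_sup.
  by exists (u N); exists N => /=.
by move=> _ [n /= Hn <-]; apply: ub.
Unshelve. all: end_near.
Qed.
Lemma rho_eq (R : realType) (X : Type) (d : X -> X -> R) k (T : 'rV[int]_k -> X -> X) c alpha x :
  rho d T c alpha x x = 0.
Proof. by rewrite /rho /nxy; case: pselect. Qed.

Lemma rho_neq (R : realType) (X : Type) (d : X -> X -> R) k (T : 'rV[int]_k -> X -> X) c alpha x y :
  (forall x y, x <> y -> exists u, c < d (T u x) (T u y)) -> x <> y ->
  exists m, rho d T c alpha x y = alpha ^- m /\ nset d T c x y m /\
     (forall n, nset d T c x y n -> (m <= n)%N).
Proof.
move=> hexp xy; rewrite /rho /nxy; destruct (pselect (x = y)) as [e|ne]; first by case: (xy e).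
destruct (pselect (exists n, `[< nset d T c x y n >])) as [h|h]; simpl.
  case: (ex_minnP h) => m Hm Hmin; exists m; split => //; split.
    exact/asboolP.
  by move=> n hn; apply: Hmin; apply/asboolP.
exfalso; have [u hu] := hexp _ _ xy; have [n hn] := normle_exists u.
by apply: h; exists n; apply/asboolP; exists u => //; apply: ltW.
Qed.

Lemma rho_ge0 (R : realType) (X : Type) (d : X -> X -> R) k (T : 'rV[int]_k -> X -> X) c alpha x y :
  1 < alpha -> 0 <= rho d T c alpha x y.
Proof.
move=> a1; rewrite /rho; case: nxy => // n; exact/ltW/apow_gt0.
Qed.

Lemma rho_le1 (R : realType) (X : Type) (d : X -> X -> R) k (T : 'rV[int]_k -> X -> X) c alpha x y :
  1 < alpha -> rho d T c alpha x y <= 1.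
Proof.
move=> a1; rewrite /rho; case: nxy => // n; exact/apow_le1.
Qed.

Lemma rho_le_of (R : realType) (X : Type) (d : X -> X -> R) k (T : 'rV[int]_k -> X -> X) c alpha x y N :
  1 < alpha -> (forall x y, x <> y -> exists u, c < d (T u x) (T u y)) ->
  (forall u, normle u N -> d (T u x) (T u y) < c) ->
  rho d T c alpha x y <= alpha ^- N.+1.
Proof.
move=> a1 hexp h.
case: (pselect (x = y)) => [<-|xy]; first by rewrite rho_eq; exact/ltW/apow_gt0.
have [m [-> [[u hu cu] hmin]]] := rho_neq alpha hexp xy.
apply: apow_le => //; rewrite ltnNge; apply/negP => mN.
have := h u (normle_mono mN hu); rewrite ltNge cu //.
Qed.

Lemma unif_L (R : realType) (X : Type) (d : X -> X -> R) k (T : 'rV[int]_k -> X -> X) c N x y :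
  is_metric d -> (forall u, d_continuous d (T u)) ->
  (forall u, normle u N -> d (T u x) (T u y) < c) ->
  exists2 del : R, 0 < del & forall x' y', d x x' < del -> d y y' < del ->
     forall u, normle u N -> d (T u x') (T u y') < c.
Proof.
move=> [d0 dxx dsym dtri] hcont h.
have [s hs] := normle_fin k N.
pose s' := [seq u <- s | normle u N].
suff : exists2 del : R, 0 < del & forall x' y', d x x' < del -> d y y' < del ->
     forall u, u \in s' -> d (T u x') (T u y') < c.
  move=> [del del0 H]; exists del => // x' y' h1 h2 u hu; apply: H => //.
  by rewrite mem_filter hu hs.
have : forall u, u \in s' -> d (T u x) (T u y) < c.
  by move=> u; rewrite mem_filter => /andP[hu _]; apply: h.
elim: s' => [|u s1 IH] H.
  by exists 1 => //.
have [del3 del30 H3] := IH (fun u' hu' => H u' (mem_behead (s:=u :: s1) hu')).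
have hu : d (T u x) (T u y) < c by apply: H; rewrite inE eqxx.
set g := c - d (T u x) (T u y).
have g0 : 0 < g / 2 by rewrite /g; lra.
have [del1 del10 H1] := hcont u x _ g0.
have [del2 del20 H2] := hcont u y _ g0.
exists (Num.min del1 (Num.min del2 del3)).
  by rewrite !lt_min del10 del20 del30.
move=> x' y'; rewrite !lt_min => /and3P[hx1 hx2 hx3] /and3P[hy1 hy2 hy3] u'.
rewrite inE => /orP[/eqP ->|hu'].
  have e1 := H1 _ hx1; have e2 := H2 _ hy2.
  have t1 := dtri (T u x') (T u x) (T u y').
  have t2 := dtri (T u x) (T u y) (T u y').
  have t3 := dsym (T u x') (T u x).
  rewrite /g in e1 e2; lra.
exact: H3.
Qed.


Lemma rho_E (R : realType) (X : Type) (d : X -> X -> R) k (T : 'rV[int]_k -> X -> X) c alpha x y b :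
  is_metric d -> (forall u, d_continuous d (T u)) -> 1 < alpha -> 0 < c ->
  (forall x y, x <> y -> exists u, c < d (T u x) (T u y)) ->
  (x <> y -> rho d T c alpha x y <= b) -> (x = y -> 0 < b) ->
  exists2 del : R, 0 < del & forall x' y', d x x' < del -> d y y' < del ->
    rho d T c alpha x' y' <= b.
Proof.
move=> dm hcont a1 c0 hexp hb1 hb2.
have [d0 dxx dsym dtri] := dm.
case: (pselect (x = y)) => [xy|xy].
  have [N hN] := apow_small a1 (hb2 xy).
  have [del del0 H] : exists2 del : R, 0 < del & forall x' y', d x x' < del -> d y y' < del ->
     forall u, normle u N -> d (T u x') (T u y') < c.
    apply: unif_L => // u _; rewrite xy; have [_ ->] := dxx (T u y) (T u y) => //.
  exists del => // x' y' h1 h2.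
  apply: le_trans (rho_le_of a1 hexp (H _ _ h1 h2)) _.
  apply: le_trans (ltW hN); exact: apow_le.
have [m [hm [hn hmin]]] := rho_neq alpha hexp xy.
have hb := hb1 xy; rewrite hm in hb.
case: m hm hn hmin hb => [|N] hm hn hmin hb.
  exists 1 => // x' y' _ _; apply: le_trans hb; rewrite expr0 invr1; exact: rho_le1.
have hN : forall u, normle u N -> d (T u x) (T u y) < c.
  move=> u hu; rewrite ltNge; apply/negP => cu.
  by have := hmin N (ex_intro2 _ _ u hu cu); rewrite ltnn.
have [del del0 H] := unif_L dm hcont hN.
exists del => // x' y' h1 h2.
exact: le_trans (rho_le_of a1 hexp (H _ _ h1 h2)) hb.
Qed.
Lemma rho_sym (R : realType) (X : Type) (d : X -> X -> R) k (T : 'rV[int]_k -> X -> X) c alpha x y :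
  is_metric d -> (forall x y, x <> y -> exists u, c < d (T u x) (T u y)) ->
  rho d T c alpha x y = rho d T c alpha y x.
Proof.
move=> [d0 dxx dsym dtri] hexp.
case: (pselect (x = y)) => [<-//|xy].
have yx : y <> x by move=> e; apply: xy.
have [m [-> [hm hmin]]] := rho_neq alpha hexp xy.
have [m' [-> [hm' hmin']]] := rho_neq alpha hexp yx.
have sw : forall a b n, nset d T c a b n -> nset d T c b a n.
  by move=> a b n [u hu cu]; exists u => //; rewrite dsym.
suff -> : m = m' by [].
by apply/eqP; rewrite eqn_leq hmin ?hmin' //; apply: sw.
Qed.

Lemma rho_zero (R : realType) (X : Type) (d : X -> X -> R) k (T : 'rV[int]_k -> X -> X) c alpha x y :
  1 < alpha -> (forall x y, x <> y -> exists u, c < d (T u x) (T u y)) ->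
  rho d T c alpha x y = 0 <-> x = y.
Proof.
move=> a1 hexp; split; last by move=> ->; rewrite rho_eq.
case: (pselect (x = y)) => [//|xy].
have [m [-> _]] := rho_neq alpha hexp xy.
by move=> h; have := apow_gt0 m a1; rewrite h ltxx.
Qed.

Lemma max2 (R : realType) (t p q : R) : (t <= 2 * p) \/ (t <= 2 * q) -> t <= 2 * Num.max p q.
Proof.
have hp : p <= Num.max p q by rewrite le_max lexx.
have hq : q <= Num.max p q by rewrite le_max lexx orbT.
case=> h; lra.
Qed.

Lemma rho_tri (R : realType) (X : Type) (d : X -> X -> R) k (T : 'rV[int]_k -> X -> X) c l alpha x y z :
  is_metric d -> is_action T -> 0 < c ->
  (forall x y, x <> y -> exists u, c < d (T u x) (T u y)) ->
  (forall x y, c / 2 <= d x y -> exists2 u, normle u l & c <= d (T u x) (T u y)) ->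
  1 < alpha -> alpha ^+ l < 2 ->
  rho d T c alpha x z <= 2 * Num.max (rho d T c alpha x y) (rho d T c alpha y z).
Proof.
move=> dm [T0 TD] c0 hexp hl a1 al2.
have [d0 dxx dsym dtri] := dm.
have r0 := fun a b => rho_ge0 d T c a b a1.
case: (pselect (x = z)) => [<-|xz].
  by rewrite rho_eq; apply: max2; left; rewrite mulr_ge0.
case: (pselect (x = y)) => [<-|xy].
  by apply: max2; right; have := r0 x z; lra.
case: (pselect (y = z)) => [<-|yz].
  by apply: max2; left; have := r0 x y; lra.
have [m [-> [[u hu cu] _]]] := rho_neq alpha hexp xz.
have [a [-> [_ hmina]]] := rho_neq alpha hexp xy.
have [b [-> [_ hminb]]] := rho_neq alpha hexp yz.
have al0 : 0 <= alpha ^+ l by rewrite exprn_ge0 //; lra.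
have key : forall j, (j <= m + l)%N -> alpha ^- m <= 2 * alpha ^- j.
  move=> j hj; apply: le_trans (apow_shift a1 hj) _.
  by rewrite ler_pM2r ?apow_gt0 // ltW.
apply: max2.
have t := dtri (T u x) (T u y) (T u z).
case: (lerP (c / 2) (d (T u x) (T u y))) => h.
  left; apply: key; have [v hv cv] := hl _ _ h.
  rewrite -!TD in cv.
  by apply: hmina; exists (v + u) => //; rewrite addnC; apply: normle_add.
right; apply: key.
have h' : c / 2 <= d (T u y) (T u z) by lra.
have [v hv cv] := hl _ _ h'.
rewrite -!TD in cv.
by apply: hminb; exists (v + u) => //; rewrite addnC; apply: normle_add.
Qed.

Lemma rho_limsup (R : realType) (X : Type) (d : X -> X -> R) k (T : 'rV[int]_k -> X -> X) c alpha
  (xs ys : nat -> X) x y :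
  is_metric d -> (forall u, d_continuous d (T u)) -> 1 < alpha -> 0 < c ->
  (forall x y, x <> y -> exists u, c < d (T u x) (T u y)) ->
  d_cvg d xs x -> d_cvg d ys y ->
  limn_sup (fun n => rho d T c alpha (xs n) (ys n)) <= rho d T c alpha x y.
Proof.
move=> dm hcont a1 c0 hexp hx hy.
have [d0 dxx dsym dtri] := dm.
have step : forall b, (x <> y -> rho d T c alpha x y <= b) -> (x = y -> 0 < b) ->
    limn_sup (fun n => rho d T c alpha (xs n) (ys n)) <= b.
  move=> b hb1 hb2.
  have [del del0 H] := rho_E dm hcont a1 c0 hexp hb1 hb2.
  have [N1 hN1] := hx _ del0; have [N2 hN2] := hy _ del0.
  apply: (@limsup_le _ _ _ (maxn N1 N2)).
    by move=> n; rewrite rho_ge0 // rho_le1.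
  move=> n hn; apply: H.
    by rewrite dsym; apply: hN1; apply: leq_trans hn; apply: leq_maxl.
  by rewrite dsym; apply: hN2; apply: leq_trans hn; apply: leq_maxr.
case: (pselect (x = y)) => [xy|xy]; last by apply: step.
rewrite xy rho_eq.
set L := limn_sup _.
case: (lerP L 0) => // hL.
have h2 : 0 < L / 2 by lra.
have h : L <= L / 2 := step (L / 2) (fun h => False_ind _ (h xy)) (fun _ => h2).
exfalso; lra.
Qed.

Lemma rho_open (R : realType) (X : Type) (d : X -> X -> R) k (T : 'rV[int]_k -> X -> X) c alpha x e :
  is_metric d -> (forall u, d_continuous d (T u)) -> 1 < alpha -> 0 < c ->
  (forall x y, x <> y -> exists u, c < d (T u x) (T u y)) ->
  0 < e -> d_open d (fun y => rho d T c alpha x y < e).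
Proof.
move=> dm hcont a1 c0 hexp e0 y hy.
have [d0 dxx dsym dtri] := dm.
have dxx0 : d x x = 0 by have [_ ->] := dxx x x.
case: (pselect (x = y)) => [xy|xy].
  have [del del0 H] := rho_E (b := e / 2) dm hcont a1 c0 hexp (fun h => False_ind _ (h xy)) (fun _ => ltac:(by rewrite divr_gt0)).
  exists del => // z hz; subst y; have := H x z; rewrite dxx0 => /(_ del0 hz); lra.
have [del del0 H] := rho_E (b := rho d T c alpha x y) dm hcont a1 c0 hexp (fun _ => lexx _) (fun h => False_ind _ (xy h)).
exists del => // z hz; have := H x z; rewrite dxx0 => /(_ del0 hz) h.
exact: le_lt_trans h hy.
Qed.

Lemma rho_base (R : realType) (X : Type) (d : X -> X -> R) k (T : 'rV[int]_k -> X -> X) c alpha :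
  is_metric d -> d_compact d -> (forall u, d_continuous d (T u)) -> 1 < alpha -> 0 < c ->
  (forall x y, x <> y -> exists u, c < d (T u x) (T u y)) ->
  forall U, d_open d U -> forall y, U y ->
    exists x, exists2 e : R, 0 < e &
      rho d T c alpha x y < e /\ (forall z, rho d T c alpha x z < e -> U z).
Proof.
move=> dm hcomp hcont a1 c0 hexp U hU y Uy.
have [d0 dxx dsym dtri] := dm.
have dxx0 : forall x, d x x = 0 by move=> x; have [_ ->] := dxx x x.
have [eps eps0 Heps] := hU y Uy.
pose F (o : option 'rV[int]_k) : X -> Prop :=
  match o with None => fun z => d y z < eps | Some u => fun z => c < d (T u y) (T u z) end.
have Fo : forall o, d_open d (F o).
  case => [u|] z /= hz.
    have g0 : 0 < d (T u y) (T u z) - c by lra.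
    have [del del0 H] := hcont u z _ g0.
    exists del => // z' hz'; have := H _ hz'.
    have := dtri (T u y) (T u z') (T u z); have := dsym (T u z') (T u z); lra.
  exists (eps - d y z); first lra.
  move=> z' hz'; have := dtri y z z'; lra.
have Fc : forall z, exists o, F o z.
  move=> z; case: (pselect (y = z)) => [<-|yz]; first by exists None; rewrite /= dxx0.
  by have [u hu] := hexp _ _ yz; exists (Some u).
have [n [f hf]] := hcomp _ F Fo Fc.
pose nb (o : option 'rV[int]_k) : nat :=
  match o with None => 0%N | Some u => ex_minn (normle_exists u) end.
have nbP : forall u, normle u (nb (Some u)) by move=> u /=; case: ex_minnP.
pose N := (\sum_(i < n) nb (f i))%N.
have NP : forall i, (nb (f i) <= N)%N by move=> i; rewrite /N (bigD1 i) //= leq_addr.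
exists y, (alpha ^- N); first exact: apow_gt0.
split; first by rewrite rho_eq apow_gt0.
move=> z hz; have [i hi] := hf z.
move: hi (NP i); case: (f i) => [u|] /= hi hN; last exact: Heps.
exfalso.
case: (pselect (y = z)) => [yz|yz].
  by move: hi; rewrite yz dxx0 => hi; move: (lt_trans c0 hi); rewrite ltxx.
have [m [hm [_ hmin]]] := rho_neq alpha hexp yz.
have mN : (m <= N)%N by apply: hmin; exists u => //; [exact: normle_mono hN (nbP u) | exact: ltW].
rewrite hm in hz; by move: (lt_le_trans hz (apow_le a1 mN)); rewrite ltxx.
Qed.

Unset Implicit Arguments.

Theorem lemma4p3 (R : realType) (X : Type) (d : X -> X -> R)
  (k : nat) (T : 'rV[int]_k -> X -> X) (c : R) (l : nat) (alpha : R) :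
  is_metric d -> d_compact d -> (0 < k)%N ->
  is_action T -> (forall u, d_continuous d (T u)) ->
  0 < c ->
  (forall x y, x <> y -> exists u, c < d (T u x) (T u y)) ->
  (0 < l)%N ->
  (forall x y, c / 2 <= d x y -> exists2 u, normle u l & c <= d (T u x) (T u y)) ->
  1 < alpha -> alpha ^+ l < 2 ->
  let r := rho d T c alpha in
  [/\ (forall x y, r x y = r y x),
      (forall x y, r x y = 0 <-> x = y),
      (forall x y z, r x z <= 2 * Num.max (r x y) (r y z)),
      (forall (xs ys : nat -> X) x y, d_cvg d xs x -> d_cvg d ys y ->
          limn_sup (fun n => r (xs n) (ys n)) <= r x y) &
      ((forall x (e : R), 0 < e -> d_open d (fun y => r x y < e)) /\
       (forall U, d_open d U -> forall y, U y ->
          exists x, exists2 e : R, 0 < e &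
            r x y < e /\ (forall z, r x z < e -> U z)))].
Proof.
move=> dm hcomp k0 hact hcont c0 hexp l0 hl a1 al2 r; rewrite /r.
split.
- by move=> x y; apply: rho_sym.
- by move=> x y; apply: rho_zero.
- by move=> x y z; apply: (rho_tri (l := l)).
- by move=> xs ys x y hx hy; apply: rho_limsup.
- split.
    by move=> x e e0; apply: rho_open.
  exact: rho_base.
Qed.
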